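(* Let $(U,A)$ be a cocommutative left bialgebroid (respectively cocommutative left Hopf algebroid) over a commutative algebra $A$, and let $R$ be a commutative left $U$-module algebra. Then the smash product $R\#U$ is a cocommutative left bialgebroid (respectively cocommutative left Hopf algebroid) over $R$, with source and target $r\mapsto r\#1$, comultiplication $R\otimes_AU\xrightarrow{R\otimes_A\Delta}R\otimes_AU\otimes_AU\cong(R\otimes_AU)\otimes_R(R\otimes_AU)$ and counit $R\otimes_AU\xrightarrow{R\otimes_A\varepsilon}R\otimes_AA\cong R$.
   Context: A cocommutative left bialgebroid over a commutative $\Bbbk$-algebra $A$ is a left bialgebroid $(U,A,\Delta,\varepsilon,s,t)$ with $s=t$ and $\mathrm{tw}\circ\Delta=\Delta$; concretely $U$ is a $\Bbbk$-algebra with an algebra map $s\colon A\to U$, a coassociative, counital, multiplicative, unital $\Delta\colon U\to U\otimes_AU$ (tensor over left multiplication by $s(A)$; $\Delta$ lands in the subspace where $u_{(1)}s(a)\otimes u_{(2)}=u_{(1)}\otimes u_{(2)}s(a)$), and a counit $\varepsilon\colon U\to A$, $A$-linear with $\varepsilon(uv)=\varepsilon(u\,s(\varepsilon(v)))$. It is a left Hopf algebroid if $\beta\colon U\otimes_AU\to U\otimes_AU$, $u\otimes v\mapsto u_{(1)}\otimes u_{(2)}v$ (domain tensor over right multiplication on the first factor and left on the second) is bijective. A left $U$-module algebra $R$ is an algebra with a left $U$-module structure (then an $A$-algebra via $a\mapsto s(a)\cdot1$ in the commutative case) with $u\cdot(rr')=(u_{(1)}\cdot r)(u_{(2)}\cdot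 r')$, $u\cdot1_R=\varepsilon(u)\cdot1_R$, $(r\cdot a)r'=r(a\cdot r')$. The smash product $R\#U=R\otimes_AU$ has product $(r\#u)(r'\#u')=r(u_{(1)}\cdot r')\#u_{(2)}u'$ and unit $1\#1$. *)

(* Defs.v *)
(* Tensor products over a commutative ring are modelled by
   formal sums (seq of pairs) modulo the relation "every balanced biadditive
   map into every abelian group takes the same value", which is exactly
   equality in the tensor product. *)
From HB Require Import structures.
From mathcomp Require Import all_boot all_order all_algebra.
Set Implicit Arguments. Unset Strict Implicit. Unset Printing Implicit Defensive.
Import GRing.Theory.
Local Open Scope ring_scope.

(* f : V -> W -> G is balanced over scalars K acting on V by aV (on the
   right, written as an operator) and on W by aW; eV, eW are the equalities
   (equivalences) of V and W. *)
Definition balanced2 (K V W : Type) (eV : V -> V -> Prop) (eW : W -> W -> Prop)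
  (addV : V -> V -> V) (addW : W -> W -> W) (aV : K -> V -> V) (aW : K -> W -> W)
  (G : zmodType) (f : V -> W -> G) : Prop :=
  [/\ (forall x x' y, eV x x' -> f x y = f x' y),
      (forall x y y', eW y y' -> f x y = f x y'),
      (forall x x' y, f (addV x x') y = f x y + f x' y),
      (forall x y y', f x (addW y y') = f x y + f x y') &
      (forall k x y, f (aV k x) y = f x (aW k y))].

Definition tens_eq (K V W : Type) (eV : V -> V -> Prop) (eW : W -> W -> Prop)
  (addV : V -> V -> V) (addW : W -> W -> W) (aV : K -> V -> V) (aW : K -> W -> W)
  (s t : seq (V * W)) : Prop :=
  forall (G : zmodType) (f : V -> W -> G),
    balanced2 eV eW addV addW aV aW f ->
    \sum_(p <- s) f p.1 p.2 = \sum_(p <- t) f p.1 p.2.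

Definition balanced3 (K V : Type) (eV : V -> V -> Prop) (addV : V -> V -> V)
  (aV : K -> V -> V) (G : zmodType) (f : V -> V -> V -> G) : Prop :=
  (forall x x' y z, eV x x' -> f x y z = f x' y z) /\
      (forall x y y' z, eV y y' -> f x y z = f x y' z) /\
      (forall x y z z', eV z z' -> f x y z = f x y z') /\
      (forall x x' y z, f (addV x x') y z = f x y z + f x' y z) /\
      (forall x y y' z, f x (addV y y') z = f x y z + f x y' z) /\
      (forall x y z z', f x y (addV z z') = f x y z + f x y z') /\
      (forall k x y z, f (aV k x) y z = f x (aV k y) z) /\
      (forall k x y z, f x (aV k y) z = f x y (aV k z)).

Definition tens3_eq (K V : Type) (eV : V -> V -> Prop) (addV : V -> V -> V)
  (aV : K -> V -> V) (s t : seq (V * V * V)) : Prop :=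
  forall (G : zmodType) (f : V -> V -> V -> G),
    balanced3 eV addV aV f ->
    \sum_(p <- s) f p.1.1 p.1.2 p.2 = \sum_(p <- t) f p.1.1 p.1.2 p.2.

(* The carrier is a type together with an equivalence [ceq] (its equality);
   for an honest ring this is Leibniz equality, for the smash product it is
   equality in R (x)_A U. *)
Record rawbgd (B : Type) := RawBgd {
  car : Type;
  ceq : car -> car -> Prop;
  cadd : car -> car -> car;
  czero : car;
  copp : car -> car;
  cmul : car -> car -> car;
  cone : car;
  csrc : B -> car;                   (* source = target *)
  cDelta : car -> seq (car * car);   (* a representative of Delta u in car (x)_B car *)
  ceps : car -> B }.
Arguments car {B} r.
Arguments ceq {B} r _ _.
Arguments cadd {B} r _ _.
Arguments czero {B} r.
Arguments copp {B} r _.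
Arguments cmul {B} r _ _.
Arguments cone {B} r.
Arguments csrc {B} r _.
Arguments cDelta {B} r _.
Arguments ceps {B} r _.

Section Bialgebroid.
Variables (B : comPzRingType) (D : rawbgd B).
Local Notation V := (car D).
Local Notation "x ~ y" := (ceq D x y) (at level 70).
Local Notation "x +' y" := (cadd D x y) (at level 50).
Local Notation "x *' y" := (cmul D x y) (at level 40).
Local Notation s := (csrc D).
Local Notation Delta := (cDelta D).
Local Notation eps := (ceps D).

Definition lmulB (b : B) (x : V) : V := s b *' x.
Definition rmulB (b : B) (x : V) : V := x *' s b.

Definition teqD := tens_eq (ceq D) (ceq D) (cadd D) (cadd D) lmulB lmulB.
(* domain of the Galois map: first factor with right multiplication by s(B),
   second factor with left multiplication by s(B) *)
Definition teqD' := tens_eq (ceq D) (ceq D) (cadd D) (cadd D) rmulB lmulB.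
Definition teq3D := tens3_eq (ceq D) (cadd D) lmulB.

Definition vsum (l : seq V) : V := foldr (cadd D) (czero D) l.

Record cocomm_bialgebroid : Prop := {
  bg_refl : forall x, x ~ x;
  bg_sym : forall x y, x ~ y -> y ~ x;
  bg_trans : forall x y z, x ~ y -> y ~ z -> x ~ z;
  bg_add_compat : forall x x' y y', x ~ x' -> y ~ y' -> x +' y ~ x' +' y';
  bg_opp_compat : forall x x', x ~ x' -> copp D x ~ copp D x';
  bg_mul_compat : forall x x' y y', x ~ x' -> y ~ y' -> x *' y ~ x' *' y';
  bg_addA : forall x y z, x +' (y +' z) ~ (x +' y) +' z;
  bg_addC : forall x y, x +' y ~ y +' x;
  bg_add0 : forall x, czero D +' x ~ x;
  bg_addN : forall x, copp D x +' x ~ czero D;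
  bg_mulA : forall x y z, x *' (y *' z) ~ (x *' y) *' z;
  bg_mul1l : forall x, cone D *' x ~ x;
  bg_mul1r : forall x, x *' cone D ~ x;
  bg_mulDl : forall x y z, (x +' y) *' z ~ x *' z +' y *' z;
  bg_mulDr : forall x y z, x *' (y +' z) ~ x *' y +' x *' z;
  bg_src_add : forall a b, s (a + b) ~ s a +' s b;
  bg_src_mul : forall a b, s (a * b) ~ s a *' s b;
  bg_src_one : s 1 ~ cone D;
  bg_Delta_compat : forall u v, u ~ v -> teqD (Delta u) (Delta v);
  bg_Delta_add : forall u v, teqD (Delta (u +' v)) (Delta u ++ Delta v);
  bg_Delta_linl : forall a u,
    teqD (Delta (lmulB a u)) [seq (lmulB a p.1, p.2) | p <- Delta u];
  bg_Delta_linr : forall a u,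
    teqD (Delta (lmulB a u)) [seq (p.1, lmulB a p.2) | p <- Delta u];
  (* Delta lands in the Takeuchi subspace *)
  bg_takeuchi : forall a u,
    teqD [seq (rmulB a p.1, p.2) | p <- Delta u]
         [seq (p.1, rmulB a p.2) | p <- Delta u];
  bg_coassoc : forall u,
    teq3D (flatten [seq [seq (q.1, q.2, p.2) | q <- Delta p.1] | p <- Delta u])
          (flatten [seq [seq (p.1, q.1, q.2) | q <- Delta p.2] | p <- Delta u]);
  bg_Delta_mul : forall u v,
    teqD (Delta (u *' v))
         (flatten [seq [seq (p.1 *' q.1, p.2 *' q.2) | q <- Delta v] | p <- Delta u]);
  bg_Delta_one : teqD (Delta (cone D)) [:: (cone D, cone D)];
  bg_cocomm : forall u, teqD [seq (p.2, p.1) | p <- Delta u] (Delta u);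
  bg_eps_compat : forall u v, u ~ v -> eps u = eps v;
  bg_eps_add : forall u v, eps (u +' v) = eps u + eps v;
  bg_eps_lin : forall a u, eps (lmulB a u) = a * eps u;
  bg_eps_one : eps (cone D) = 1;
  bg_eps_mul : forall u v, eps (u *' v) = eps (u *' s (eps v));
  (* counitality: (eps (x) id) Delta = id and (id (x) eps) Delta = id,
     using B (x)_B V ~= V, b (x) v |-> s(b) v and V (x)_B B ~= V, v (x) b |-> t(b) v *)
  bg_counitl : forall u, vsum [seq lmulB (eps p.1) p.2 | p <- Delta u] ~ u;
  bg_counitr : forall u, vsum [seq lmulB (eps p.2) p.1 | p <- Delta u] ~ u }.

Definition beta (w : seq (V * V)) : seq (V * V) :=
  flatten [seq [seq (q.1, q.2 *' p.2) | q <- Delta p.1] | p <- w].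

Record cocomm_hopf : Prop := {
  hopf_bgd : cocomm_bialgebroid;
  hopf_beta_compat : forall w w', teqD' w w' -> teqD (beta w) (beta w');
  hopf_beta_inj : forall w w', teqD (beta w) (beta w') -> teqD' w w';
  hopf_beta_surj : forall z, exists w, teqD (beta w) z }.

End Bialgebroid.

Definition ring_raw (A : comPzRingType) (U : pzRingType) (s : A -> U)
  (Delta : U -> seq (U * U)) (eps : U -> A) : rawbgd A :=
  @RawBgd A U (@eq U) +%R 0 -%R *%R 1 s Delta eps.

Record module_algebra (A : comPzRingType) (U : pzRingType) (s : A -> U)
  (Delta : U -> seq (U * U)) (eps : U -> A) (R : comPzRingType)
  (act : U -> R -> R) : Prop := {
  ma_addl : forall u v r, act (u + v) r = act u r + act v r;
  ma_addr : forall u r r', act u (r + r') = act u r + act u r';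
  ma_one : forall r, act 1 r = r;
  ma_mul : forall u v r, act (u * v) r = act u (act v r);
  ma_rmul : forall u r r', act u (r * r') = \sum_(p <- Delta u) act p.1 r * act p.2 r';
  ma_unit : forall u, act u 1 = act (s (eps u)) 1;
  ma_bal : forall a r r', act (s a) r * r' = r * act (s a) r' }.

Section Smash.
Variables (A : comPzRingType) (U : pzRingType) (s : A -> U)
  (Delta : U -> seq (U * U)) (eps : U -> A) (R : comPzRingType)
  (act : U -> R -> R).

(* equality in R (x)_A U: r.a = s(a).r on R, a.u = s(a) u on U *)
Definition smash_eq : seq (R * U) -> seq (R * U) -> Prop :=
  tens_eq (@eq R) (@eq U) +%R +%R (fun a r => act (s a) r) (fun a u => s a * u).

(* (r # u)(r' # u') = r (u_(1) . r') # u_(2) u' *)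
Definition smash_mul (x y : seq (R * U)) : seq (R * U) :=
  flatten [seq flatten [seq [seq (p.1 * act q.1 p'.1, q.2 * p'.2) | q <- Delta p.2]
                       | p' <- y] | p <- x].

(* R (x)_A Delta followed by R (x)_A U (x)_A U ~= (R#U) (x)_R (R#U),
   r (x) u (x) v |-> (r # u) (x) (1 # v) *)
Definition smash_Delta (x : seq (R * U)) : seq (seq (R * U) * seq (R * U)) :=
  flatten [seq [seq ([:: (p.1, q.1)], [:: (1, q.2)]) | q <- Delta p.2] | p <- x].

(* R (x)_A eps followed by R (x)_A A ~= R, r (x) a |-> r.a = s(a).r *)
Definition smash_eps (x : seq (R * U)) : R :=
  \sum_(p <- x) act (s (eps p.2)) p.1.

Definition smash_raw : rawbgd R :=
  @RawBgd R (seq (R * U)) smash_eq cat [::] (map (fun p => (- p.1, p.2)))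
    smash_mul [:: (1, 1)] (fun r => [:: (r, 1)]) smash_Delta smash_eps.

End Smash.

(* Main.v *)
Require Import Defs.
From mathcomp Require Import all_boot all_order all_algebra.
From mathcomp Require Import ring.
From Stdlib Require Import ClassicalEpsilon.
Set Implicit Arguments. Unset Strict Implicit. Unset Printing Implicit Defensive.
Import GRing.Theory.

Section Smash.
Local Open Scope ring_scope.
Variables (A : comPzRingType) (U : pzRingType) (s : A -> U)
  (Delta : U -> seq (U * U)) (eps : U -> A) (R : comPzRingType)
  (act : U -> R -> R).
Hypothesis Hma : module_algebra s Delta eps act.
Hypothesis HU : cocomm_bialgebroid (ring_raw s Delta eps).

Local Notation DU := (ring_raw s Delta eps).

Definition balU (G : zmodType) (f : U -> U -> G) :=
  [/\ (forall x x' y, f (x + x') y = f x y + f x' y),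
      (forall x y y', f x (y + y') = f x y + f x y') &
      (forall a x y, f (s a * x) y = f x (s a * y))].

Definition sumU (G : zmodType) (f : U -> U -> G) (L : seq (U * U)) :=
  \sum_(p <- L) f p.1 p.2.

Lemma balU_bal (G : zmodType) (f : U -> U -> G) : balU f ->
  balanced2 (ceq DU) (ceq DU) (cadd DU) (cadd DU) (@lmulB _ DU) (@lmulB _ DU) f.
Proof. by case=> h1 h2 h3; split=> //= [x x' y ->|x y y' ->]. Qed.

Lemma teqU_use L L' : @teqD _ DU L L' ->
  forall (G : zmodType) (f : U -> U -> G), balU f -> sumU f L = sumU f L'.
Proof. by move=> H G f /balU_bal Hf; apply: H. Qed.

Lemma teqU_intro L L' : (forall (G : zmodType) (f : U -> U -> G), balU f -> sumU f L = sumU f L') ->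
  @teqD _ DU L L'.
Proof. move=> H G f [_ _ h3 h4 h5]; apply: H; split=> //. Qed.

Lemma s_add a b : s (a + b) = s a + s b. Proof. exact: (bg_src_add HU). Qed.
Lemma s_mul a b : s (a * b) = s a * s b. Proof. exact: (bg_src_mul HU). Qed.
Lemma s_one : s 1 = 1. Proof. exact: (bg_src_one HU). Qed.

Lemma addf0 (G H : zmodType) (f : G -> H) : (forall x y, f (x + y) = f x + f y) -> f 0 = 0.
Proof. by move=> h; apply: (addrI (f 0)); rewrite -h !addr0. Qed.

Lemma addfN (G H : zmodType) (f : G -> H) : (forall x y, f (x + y) = f x + f y) ->
  forall x, f (- x) = - f x.
Proof. by move=> h x; apply/eqP; rewrite -subr_eq0 opprK -h addNr (addf0 h). Qed.

Lemma addf_sum (G H : zmodType) (f : G -> H) (I : Type) (l : seq I) (F : I -> G) :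
  (forall x y, f (x + y) = f x + f y) -> f (\sum_(i <- l) F i) = \sum_(i <- l) f (F i).
Proof.
move=> h; elim: l => [|a l IH]; first by rewrite !big_nil (addf0 h).
by rewrite !big_cons h IH.
Qed.
Arguments addf_sum {G H f I l F}.

Lemma vsumE (l : seq U) : @vsum _ DU l = \sum_(x <- l) x.
Proof. by elim: l => [|a l IH]; rewrite ?big_nil ?big_cons //= IH. Qed.

Section Bal.
Variables (G : zmodType) (f : U -> U -> G).
Hypothesis Hf : balU f.

Lemma DL_add u v : sumU f (Delta (u + v)) = sumU f (Delta u) + sumU f (Delta v).
Proof. by rewrite (teqU_use (bg_Delta_add HU u v) Hf) /sumU big_cat. Qed.

Lemma DL_lin a u : sumU f (Delta (s a * u)) = \sum_(q <- Delta u) f (s a * q.1) q.2.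
Proof. by rewrite (teqU_use (bg_Delta_linl HU a u) Hf) /sumU big_map. Qed.

Lemma DL_tak a u : \sum_(q <- Delta u) f (q.1 * s a) q.2 = \sum_(q <- Delta u) f q.1 (q.2 * s a).
Proof. by have := teqU_use (bg_takeuchi HU a u) Hf; rewrite /sumU !big_map. Qed.

Lemma DL_cocomm u : \sum_(q <- Delta u) f q.2 q.1 = sumU f (Delta u).
Proof. by have := teqU_use (bg_cocomm HU u) Hf; rewrite /sumU !big_map. Qed.

Lemma DL_mul u v : sumU f (Delta (u * v)) =
  \sum_(p <- Delta u) \sum_(q <- Delta v) f (p.1 * q.1) (p.2 * q.2).
Proof.
rewrite (teqU_use (bg_Delta_mul HU u v) Hf) /sumU big_flatten big_map.
by apply: eq_bigr => p _; rewrite big_map.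
Qed.

Lemma DL_one : sumU f (Delta 1) = f 1 1.
Proof. by rewrite (teqU_use (bg_Delta_one HU) Hf) /sumU big_seq1. Qed.
End Bal.

Definition bal3 (G : zmodType) (h : U -> U -> U -> G) :=
  [/\ (forall x x' y z, h (x + x') y z = h x y z + h x' y z),
      (forall x y y' z, h x (y + y') z = h x y z + h x y' z),
      (forall x y z z', h x y (z + z') = h x y z + h x y z'),
      (forall a x y z, h (s a * x) y z = h x (s a * y) z) &
      (forall a x y z, h x (s a * y) z = h x y (s a * z))].

Lemma DL_coassoc (G : zmodType) (h : U -> U -> U -> G) u : bal3 h ->
  \sum_(p <- Delta u) \sum_(q <- Delta p.1) h q.1 q.2 p.2 =
  \sum_(p <- Delta u) \sum_(q <- Delta p.2) h p.1 q.1 q.2.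
Proof.
case=> h1 h2 h3 h4 h5.
have Hb : balanced3 (ceq DU) (cadd DU) (@lmulB _ DU) h.
  by do !split => //; move=> ? ? ? ? /= ->.
have := bg_coassoc HU u Hb; rewrite !big_flatten !big_map.
under eq_bigr do rewrite big_map.
by under [X in _ = X -> _]eq_bigr do rewrite big_map.
Qed.

Lemma counitlU u : \sum_(q <- Delta u) s (eps q.1) * q.2 = u.
Proof. by have := bg_counitl HU u; rewrite /= vsumE big_map. Qed.
Lemma counitrU u : \sum_(q <- Delta u) s (eps q.2) * q.1 = u.
Proof. by have := bg_counitr HU u; rewrite /= vsumE big_map. Qed.


Definition iota (a : A) : R := act (s a) 1.

Lemma act_addl u v r : act (u + v) r = act u r + act v r. Proof. exact: (ma_addl Hma). Qed.
Lemma act_addr u r r' : act u (r + r') = act u r + act u r'. Proof. exact: (ma_addr Hma). Qed.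
Lemma act0r u : act u 0 = 0. Proof. exact: addf0 (act_addr u). Qed.
Lemma act_sumr u (I : Type) (l : seq I) F : act u (\sum_(i <- l) F i) = \sum_(i <- l) act u (F i).
Proof. exact: addf_sum (act_addr u). Qed.
Lemma act_sa a r : act (s a) r = iota a * r.
Proof. by have := ma_bal Hma a 1 r; rewrite mul1r => <-. Qed.
Lemma act_mul u v r : act (u * v) r = act u (act v r). Proof. exact: (ma_mul Hma). Qed.
Lemma act1 r : act 1 r = r. Proof. exact: (ma_one Hma). Qed.
Lemma iota_mul a b : iota (a * b) = iota a * iota b.
Proof. by rewrite /iota s_mul act_mul act_sa. Qed.
Lemma iota1 : iota 1 = 1. Proof. by rewrite /iota s_one act1. Qed.
Lemma act_samul a u r : act (s a * u) r = iota a * act u r.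
Proof. by rewrite act_mul act_sa. Qed.
Lemma act_mulsa u a r : act (u * s a) r = act u (iota a * r).
Proof. by rewrite act_mul act_sa. Qed.
Lemma act_one u : act u 1 = iota (eps u). Proof. exact: (ma_unit Hma). Qed.
Lemma act_rmul u r r' : act u (r * r') = \sum_(q <- Delta u) act q.1 r * act q.2 r'.
Proof. exact: (ma_rmul Hma). Qed.

Definition balRU (G : zmodType) (g : R -> U -> G) :=
  [/\ (forall r r' u, g (r + r') u = g r u + g r' u),
      (forall r u u', g r (u + u') = g r u + g r u') &
      (forall a r u, g (iota a * r) u = g r (s a * u))].

Definition sm (G : zmodType) (g : R -> U -> G) (x : seq (R * U)) := \sum_(p <- x) g p.1 p.2.

Local Notation seqv := (smash_eq s act).
Local Notation smul := (smash_mul Delta act).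
Local Notation SR := (smash_raw s Delta eps act).

Lemma seqv_use x y : seqv x y -> forall (G : zmodType) (g : R -> U -> G), balRU g -> sm g x = sm g y.
Proof.
move=> H G g [h1 h2 h3]; apply: H; split => //; [by move=> ? ? ? ->|by move=> ? ? ? ->|].
by move=> a r u; rewrite act_sa h3.
Qed.

Lemma seqv_intro x y : (forall (G : zmodType) (g : R -> U -> G), balRU g -> sm g x = sm g y) -> seqv x y.
Proof. move=> H G g [_ _ h1 h2 h3]; apply: H; split => // a r u; by rewrite -h3 act_sa. Qed.

Lemma seqv_refl x : seqv x x. Proof. by []. Qed.
Lemma seqv_sym x y : seqv x y -> seqv y x. Proof. by move=> H G f Hf; rewrite (H G f Hf). Qed.
Lemma seqv_trans x y z : seqv x y -> seqv y z -> seqv x z.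
Proof. by move=> H1 H2 G f Hf; rewrite (H1 G f Hf) (H2 G f Hf). Qed.

Lemma sm_cat (G : zmodType) (g : R -> U -> G) x y : sm g (x ++ y) = sm g x + sm g y.
Proof. by rewrite /sm big_cat. Qed.
Lemma sm_seq1 (G : zmodType) (g : R -> U -> G) r u : sm g [:: (r, u)] = g r u.
Proof. by rewrite /sm big_seq1. Qed.

Lemma sm_mul (G : zmodType) (g : R -> U -> G) x y : sm g (smul x y) =
  \sum_(p <- x) \sum_(p' <- y) \sum_(q <- Delta p.2) g (p.1 * act q.1 p'.1) (q.2 * p'.2).
Proof.
rewrite /sm /smash_mul big_flatten big_map; apply: eq_bigr => p _.
rewrite big_flatten big_map; apply: eq_bigr => p' _; by rewrite big_map.
Qed.

Lemma L_lmul c y : seqv (smul [:: (c, 1)] y) [seq (c * p.1, p.2) | p <- y].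
Proof.
apply: seqv_intro => G g [g1 g2 g3]; rewrite sm_mul big_seq1 /sm big_map.
apply: eq_bigr => p _ /=.
have Hb : balU (fun x z => g (c * act x p.1) (z * p.2)).
  split => [x x' z|x z z'|a x z]; first by rewrite act_addl mulrDr g1.
    by rewrite mulrDl g2.
  by rewrite act_samul mulrA (mulrC c) -(mulrA (iota a)) g3 mulrA.
by have := DL_one Hb; rewrite /sumU => ->; rewrite act1 mul1r.
Qed.

Lemma seqv_addl r r' u : seqv [:: (r + r', u)] [:: (r, u); (r', u)].
Proof. by apply: seqv_intro => G g [g1 _ _]; rewrite /sm big_seq1 !big_cons big_nil addr0 g1. Qed.
Lemma seqv_addr r u u' : seqv [:: (r, u + u')] [:: (r, u); (r, u')].
Proof. by apply: seqv_intro => G g [_ g2 _]; rewrite /sm big_seq1 !big_cons big_nil addr0 g2. Qed.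
Lemma seqv_bal a r u : seqv [:: (iota a * r, u)] [:: (r, s a * u)].
Proof. by apply: seqv_intro => G g [_ _ g3]; rewrite !sm_seq1 g3. Qed.


(* ---------- (R#U) (x)_R (R#U) ~ R (x)_A U (x)_A U ---------- *)
Definition triBal (G : zmodType) (H : R -> U -> U -> G) :=
  [/\ (forall r r' u v, H (r + r') u v = H r u v + H r' u v),
      (forall r u u' v, H r (u + u') v = H r u v + H r u' v),
      (forall r u v v', H r u (v + v') = H r u v + H r u v'),
      (forall a r u v, H (iota a * r) u v = H r (s a * u) v) &
      (forall a r u v, H r (s a * u) v = H r u (s a * v))].

Definition fT (G : zmodType) (H : R -> U -> U -> G) (x y : seq (R * U)) :=
  \sum_(p <- x) \sum_(p' <- y) H (p.1 * p'.1) p.2 p'.2.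
Definition triS (G : zmodType) (H : R -> U -> U -> G) (X : seq (seq (R * U) * seq (R * U))) :=
  \sum_(z <- X) fT H z.1 z.2.

Definition balS (G : zmodType) (f : seq (R * U) -> seq (R * U) -> G) :=
  balanced2 (ceq SR) (ceq SR) (cadd SR) (cadd SR) (@lmulB _ SR) (@lmulB _ SR) f.

Lemma lmulS r x : @lmulB _ SR r x = smul [:: (r, 1)] x. Proof. by []. Qed.

Lemma T1 (G : zmodType) (H : R -> U -> U -> G) : triBal H -> balS (fT H).
Proof.
case=> h1 h2 h3 h4 h5.
have respx : forall x x' y, seqv x x' -> fT H x y = fT H x' y.
  move=> x x' y Hx; apply: (seqv_use Hx (g := fun r u => \sum_(p' <- y) H (r * p'.1) u p'.2)).
  split=> [r r' u|r u u'|a r u]; rewrite -?big_split; apply: eq_bigr => p' _.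
  - by rewrite mulrDl h1.
  - by rewrite h2.
  - by rewrite -mulrA h4.
have respy : forall x y y', seqv y y' -> fT H x y = fT H x y'.
  move=> x y y' Hy; rewrite /fT exchange_big [RHS]exchange_big.
  apply: (seqv_use Hy (g := fun r v => \sum_(p <- x) H (p.1 * r) p.2 v)).
  split=> [r r' u|r u u'|a r u]; rewrite -?big_split; apply: eq_bigr => p _.
  - by rewrite mulrDr h1.
  - by rewrite h3.
  - by rewrite mulrA (mulrC _ (iota a)) -mulrA h4 h5.
split => //=.
- by move=> x x' y; rewrite /fT big_cat.
- by move=> x y y'; rewrite /fT -big_split; apply: eq_bigr => p _; rewrite big_cat.
- move=> r x y; rewrite ?lmulS (respx _ _ _ (L_lmul r x)) (respy _ _ _ (L_lmul r y)).
  rewrite /fT big_map; apply: eq_bigr => p _; rewrite big_map; apply: eq_bigr => p' _ /=.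
  by rewrite mulrA (mulrC r) -mulrA.
Qed.

Definition Hf (G : zmodType) (f : seq (R * U) -> seq (R * U) -> G) r u v :=
  f [:: (r, u)] [:: (1, v)].

Lemma T2 (G : zmodType) (f : seq (R * U) -> seq (R * U) -> G) : balS f ->
  triBal (Hf f) /\ forall x y, f x y = fT (Hf f) x y.
Proof.
case=> [f1 f2 f3 f4 f5].
have fnil : forall y, f [::] y = 0.
  by move=> y; apply: (addrI (f [::] y)); rewrite -f3 addr0.
have fnil' : forall x, f x [::] = 0.
  by move=> x; apply: (addrI (f x [::])); rewrite -f4 addr0.
have fcons : forall a x y, f (a :: x) y = f [:: a] y + f x y by move=> a x y; rewrite -f3.
have fcons' : forall a x y, f x (a :: y) = f x [:: a] + f x y by move=> a x y; rewrite -f4.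
have move1 : forall c x y, f (smul [:: (c,1)] x) y = f x (smul [:: (c,1)] y) by exact: f5.
split.
  split => /=.
  - move=> r r' u v; rewrite /Hf (f1 _ _ _ (seqv_addl r r' u)).
    by rewrite -f3.
  - move=> r u u' v; rewrite /Hf (f1 _ _ _ (seqv_addr r u u')).
    by rewrite -f3.
  - move=> r u v v'; rewrite /Hf (f2 _ _ _ (seqv_addr 1 v v')).
    by rewrite -f4.
  - by move=> a r u v; rewrite /Hf (f1 _ _ _ (seqv_bal a r u)).
  - move=> a r u v; rewrite /Hf -(f1 _ _ _ (seqv_bal a r u)).
    have E1 : seqv (smul [:: (iota a, 1)] [:: (r, u)]) [:: (iota a * r, u)] by exact: L_lmul.
    rewrite -(f1 _ _ _ E1) move1.
    have E2 : seqv (smul [:: (iota a, 1)] [:: (1, v)]) [:: (1, s a * v)].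
      apply: seqv_trans (L_lmul _ _) _; rewrite /= mulr1 -[X in (X, v)]mulr1.
      exact: seqv_bal.
    by rewrite (f2 _ _ _ E2).
move=> x y; elim: x => [|[r u] x IH]; first by rewrite fnil /fT big_nil.
rewrite fcons IH /fT big_cons; congr (_ + _).
clear IH; elim: y => [|[r' v] y IHy]; first by rewrite fnil' big_nil.
rewrite fcons' IHy big_cons; congr (_ + _) => /=.
have E1 : seqv (smul [:: (r', 1)] [:: (1, v)]) [:: (r', v)].
  by apply: seqv_trans (L_lmul _ _) _; rewrite /= mulr1.
rewrite -(f2 _ _ _ E1) -move1 /Hf.
have E2 : seqv (smul [:: (r', 1)] [:: (r, u)]) [:: (r * r', u)].
  by apply: seqv_trans (L_lmul _ _) _; rewrite /= mulrC.
by rewrite (f1 _ _ _ E2).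
Qed.

Lemma teqS_intro X Y : (forall (G : zmodType) (H : R -> U -> U -> G), triBal H -> triS H X = triS H Y) ->
  @teqD _ SR X Y.
Proof.
move=> HX G f Hbal; have [Ht Hd] := T2 Hbal.
have -> : \sum_(p <- X) f p.1 p.2 = triS (Hf f) X by apply: eq_bigr => p _; rewrite Hd.
have -> : \sum_(p <- Y) f p.1 p.2 = triS (Hf f) Y by apply: eq_bigr => p _; rewrite Hd.
exact: HX.
Qed.

Lemma teqS_use X Y : @teqD _ SR X Y ->
  forall (G : zmodType) (H : R -> U -> U -> G), triBal H -> triS H X = triS H Y.
Proof. by move=> HX G H Hb; apply: (HX G (fT H)); apply: T1. Qed.


Lemma balU_g (G : zmodType) (g : R -> U -> G) c r' v : balRU g ->
  balU (fun a b => g (c * act a r') (b * v)).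
Proof.
case=> g1 g2 g3; split => [x x' z|x z z'|a x z].
- by rewrite act_addl mulrDr g1.
- by rewrite mulrDl g2.
- by rewrite act_samul mulrA (mulrC c) -(mulrA (iota a)) g3 mulrA.
Qed.

Lemma sm_map_l (G : zmodType) (g : R -> U -> G) c x :
  sm g [seq (c * p.1, p.2) | p <- x] = \sum_(p <- x) g (c * p.1) p.2.
Proof. by rewrite /sm big_map. Qed.

Lemma smul_compat_l x x' y : seqv x x' -> seqv (smul x y) (smul x' y).
Proof.
move=> Hx; apply: seqv_intro => G g Hg; rewrite !sm_mul.
have [g1 g2 g3] := Hg.
apply: (seqv_use Hx (g := fun r u => \sum_(p' <- y) \sum_(q <- Delta u) g (r * act q.1 p'.1) (q.2 * p'.2))).
split => [r r' u|r u u'|a r u]; rewrite -?big_split; apply: eq_bigr => p' _.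
- by rewrite -big_split; apply: eq_bigr => q _; rewrite mulrDl g1.
- by have := DL_add (balU_g r p'.1 p'.2 Hg) u u'; rewrite /sumU /=.
- have := DL_lin (balU_g r p'.1 p'.2 Hg) a u; rewrite /sumU /= => ->.
  apply: eq_bigr => q _ /=.
  by rewrite act_samul mulrA (mulrC r) -mulrA.
Qed.

Lemma smul_compat_r x y y' : seqv y y' -> seqv (smul x y) (smul x y').
Proof.
move=> Hy; apply: seqv_intro => G g Hg; rewrite !sm_mul.
have [g1 g2 g3] := Hg.
rewrite exchange_big [RHS]exchange_big /=.
apply: (seqv_use Hy (g := fun r' v => \sum_(p <- x) \sum_(q <- Delta p.2) g (p.1 * act q.1 r') (q.2 * v))).
split => [r r' u|r u u'|a r u]; rewrite -?big_split; apply: eq_bigr => p _.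
- by rewrite -big_split; apply: eq_bigr => q _; rewrite act_addr mulrDr g1.
- by rewrite -big_split; apply: eq_bigr => q _; rewrite mulrDr g2.
- under eq_bigr do rewrite -act_mulsa.
  have := DL_tak (balU_g p.1 r u Hg) a p.2; rewrite /= => ->; apply: eq_bigr => q _.
  by rewrite mulrA.
Qed.

Lemma smul_compat x x' y y' : seqv x x' -> seqv y y' -> seqv (smul x y) (smul x' y').
Proof. move=> Hx Hy; apply: seqv_trans (smul_compat_l _ Hx) (smul_compat_r _ Hy). Qed.

Lemma big_smul (G : zmodType) (F : R * U -> G) x y : \sum_(p <- smul x y) F p =
  \sum_(p <- x) \sum_(p' <- y) \sum_(q <- Delta p.2) F (p.1 * act q.1 p'.1, q.2 * p'.2).
Proof.
rewrite /smash_mul big_flatten big_map; apply: eq_bigr => p _.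
rewrite big_flatten big_map; apply: eq_bigr => p' _; by rewrite big_map.
Qed.

Lemma smul_assoc x y z : seqv (smul x (smul y z)) (smul (smul x y) z).
Proof.
apply: seqv_intro => G g Hg; have [g1 g2 g3] := Hg.
rewrite /sm !big_smul; apply: eq_bigr => p _.
rewrite big_smul /=; apply: eq_bigr => p' _.
rewrite [RHS]exchange_big; apply: eq_bigr => p'' _ /=.
set r := p.1; set u := p.2; set r' := p'.1; set v := p'.2; set r'' := p''.1; set w := p''.2.
pose Phi x y z := \sum_(c <- Delta v) g (r * act x r' * act (y * c.1) r'') (z * (c.2 * w)).
have HPhi : bal3 Phi.
  split => [x0 x1 y0 z0|x0 y0 y1 z0|x0 y0 z0 z1|a x0 y0 z0|a x0 y0 z0]; rewrite /Phi -?big_split;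
    apply: eq_bigr => c _.
  - by rewrite act_addl mulrDr mulrDl g1.
  - by rewrite mulrDl act_addl mulrDr g1.
  - by rewrite mulrDl g2.
  - by rewrite -(mulrA (s a)) !act_samul; congr (g _ _); ring.
  - rewrite -(mulrA (s a)) act_samul.
    rewrite (_ : _ * (iota a * _) = iota a * (r * act x0 r' * act (y0 * c.1) r'')); last by ring.
    by rewrite g3 mulrA.
transitivity (\sum_(q <- Delta u) \sum_(e <- Delta q.1) Phi e.1 e.2 q.2).
  rewrite exchange_big; apply: eq_bigr => q _ /=; rewrite /Phi exchange_big.
  apply: eq_bigr => c _ /=; rewrite act_rmul mulr_sumr.
  rewrite (addf_sum (fun t1 t2 => g1 t1 t2 _)); apply: eq_bigr => e _.
  by rewrite act_mul mulrA mulrA.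
rewrite (DL_coassoc _ HPhi); apply: eq_bigr => q _ /=.
have := DL_mul (balU_g (r * act q.1 r') r'' w Hg) q.2 v; rewrite /sumU /= => ->.
by rewrite /Phi; apply: eq_bigr => a _; apply: eq_bigr => c _; rewrite mulrA.
Qed.


Lemma sm_opp (G : zmodType) (g : R -> U -> G) x : balRU g ->
  sm g [seq (- p.1, p.2) | p <- x] = - sm g x.
Proof.
case=> g1 _ _; rewrite /sm big_map -sumrN; apply: eq_bigr => p _.
exact: (addfN (fun a b => g1 a b _)).
Qed.

Lemma smul1l x : seqv (smul [:: (1, 1)] x) x.
Proof.
apply: seqv_trans (L_lmul _ _) _; apply: seqv_intro => G g _.
by rewrite sm_map_l; apply: eq_bigr => p _; rewrite mul1r.
Qed.

Lemma smul1r x : seqv (smul x [:: (1, 1)]) x.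
Proof.
apply: seqv_intro => G g [g1 g2 g3]; rewrite sm_mul; apply: eq_bigr => p _.
rewrite big_seq1 /=.
transitivity (\sum_(q <- Delta p.2) g p.1 (s (eps q.1) * q.2)).
  by apply: eq_bigr => q _; rewrite act_one mulr1 mulrC g3.
by rewrite -(addf_sum (fun a b => g2 _ a b)) counitlU.
Qed.

Definition epsg (r : R) (u : U) : R := act (s (eps u)) r.

Lemma eps_lin' a u : eps (s a * u) = a * eps u. Proof. exact: (bg_eps_lin HU). Qed.
Lemma eps_add' u v : eps (u + v) = eps u + eps v. Proof. exact: (bg_eps_add HU). Qed.
Lemma iota_add a b : iota (a + b) = iota a + iota b. Proof. by rewrite /iota s_add act_addl. Qed.

Lemma balRU_eps : balRU epsg.
Proof.
rewrite /epsg; split => [r r' u|r u u'|a r u]; first by rewrite act_addr.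
  by rewrite eps_add' s_add act_addl.
by rewrite !act_sa eps_lin' iota_mul mulrA (mulrC (iota a)).
Qed.

Lemma smash_epsE x : smash_eps s eps act x = sm epsg x. Proof. by []. Qed.

Lemma balU_H (G : zmodType) (H : R -> U -> U -> G) r : triBal H -> balU (H r).
Proof. by case=> _ h2 h3 h4 h5; split. Qed.

Lemma fT_seq1 (G : zmodType) (H : R -> U -> U -> G) r u r' v :
  fT H [:: (r, u)] [:: (r', v)] = H (r * r') u v.
Proof. by rewrite /fT !big_seq1. Qed.

Lemma triS_D (G : zmodType) (H : R -> U -> U -> G) x :
  triS H (smash_Delta Delta x) = \sum_(p <- x) \sum_(q <- Delta p.2) H (p.1 * 1) q.1 q.2.
Proof.
rewrite /triS /smash_Delta big_flatten big_map; apply: eq_bigr => p _.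
by rewrite big_map; apply: eq_bigr => q _; rewrite fT_seq1.
Qed.

Lemma fT_resp1 (G : zmodType) (H : R -> U -> U -> G) x x' y : triBal H -> seqv x x' ->
  fT H x y = fT H x' y.
Proof. by move=> /T1 [f1 _ _ _ _]; apply: f1. Qed.
Lemma fT_resp2 (G : zmodType) (H : R -> U -> U -> G) x y y' : triBal H -> seqv y y' ->
  fT H x y = fT H x y'.
Proof. by move=> /T1 [_ f2 _ _ _]; apply: f2. Qed.

Lemma K_lemma (G : zmodType) (Phi : U -> U -> U -> G) u : bal3 Phi ->
  \sum_(q <- Delta u) \sum_(c <- Delta q.2) Phi q.1 c.1 c.2 =
  \sum_(q <- Delta u) \sum_(c <- Delta q.2) Phi c.1 q.1 c.2.
Proof.
move=> HP; have [p1 p2 p3 p4 p5] := HP.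
have HP' : bal3 (fun x y z => Phi y x z).
  by split => //= *; rewrite ?p1 ?p2 ?p3 // -?p4 -?p5 // p4.
rewrite -(DL_coassoc _ HP) -(DL_coassoc _ HP'); apply: eq_bigr => q _.
have Hb : balU (fun a b => Phi b a q.2).
  by split => *; rewrite ?p1 ?p2 // p4.
by have := DL_cocomm Hb q.1; rewrite /sumU /=.
Qed.


Local Notation sD := (smash_Delta Delta).

Lemma sD_compat x y : seqv x y -> @teqD _ SR (sD x) (sD y).
Proof.
move=> Hx; apply: teqS_intro => G H HH; have [h1 h2 h3 h4 h5] := HH.
rewrite !triS_D.
apply: (seqv_use Hx (g := fun r u => \sum_(q <- Delta u) H (r * 1) q.1 q.2)).
split => [r r' u|r u u'|a r u].
- by rewrite -big_split; apply: eq_bigr => q _; rewrite mulrDl h1.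
- by have := DL_add (balU_H (r * 1) HH) u u'; rewrite /sumU.
- have := DL_lin (balU_H (r * 1) HH) a u; rewrite /sumU /= => ->.
  by apply: eq_bigr => q _; rewrite -mulrA h4.
Qed.

Lemma sD_lin1 a x : @teqD _ SR (sD (smul [:: (a, 1)] x)) [seq (smul [:: (a, 1)] p.1, p.2) | p <- sD x].
Proof.
apply: teqS_intro => G H HH.
rewrite (teqS_use (sD_compat (L_lmul a x)) HH) triS_D big_map.
rewrite /triS /smash_Delta big_map big_flatten big_map; apply: eq_bigr => p _.
rewrite big_map; apply: eq_bigr => q _ /=.
by rewrite (fT_resp1 _ HH (L_lmul _ _)) /= fT_seq1.
Qed.

Lemma sD_lin2 a x : @teqD _ SR (sD (smul [:: (a, 1)] x)) [seq (p.1, smul [:: (a, 1)] p.2) | p <- sD x].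
Proof.
apply: teqS_intro => G H HH.
rewrite (teqS_use (sD_compat (L_lmul a x)) HH) triS_D big_map.
rewrite /triS /smash_Delta big_map big_flatten big_map; apply: eq_bigr => p _.
rewrite big_map; apply: eq_bigr => q _ /=.
by rewrite (fT_resp2 _ HH (L_lmul _ _)) /= fT_seq1 !mulr1 mulrC.
Qed.

Lemma fT_smul1 (G : zmodType) (H : R -> U -> U -> G) x y z :
  fT H (smul x y) z = \sum_(p <- x) \sum_(p' <- y) \sum_(q <- Delta p.2)
     \sum_(p'' <- z) H (p.1 * act q.1 p'.1 * p''.1) (q.2 * p'.2) p''.2.
Proof. by rewrite /fT big_smul. Qed.

Lemma fT_smul2 (G : zmodType) (H : R -> U -> U -> G) x y z :
  fT H x (smul y z) = \sum_(p <- x) \sum_(p' <- y) \sum_(p'' <- z) \sum_(q <- Delta p'.2)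
     H (p.1 * (p'.1 * act q.1 p''.1)) p.2 (q.2 * p''.2).
Proof. by rewrite /fT; apply: eq_bigr => p _; rewrite big_smul. Qed.

Lemma bal3_H (G : zmodType) (H : R -> U -> U -> G) r r' : triBal H ->
  bal3 (fun x y z => H (r * act x r') y z).
Proof.
case=> h1 h2 h3 h4 h5; split => [x x' y z|x y y' z|x y z z'|a x y z|a x y z] //.
- by rewrite act_addl mulrDr h1.
- by rewrite act_samul mulrA (mulrC r) -mulrA h4.
Qed.

Lemma sD_tak a x : @teqD _ SR [seq (smul p.1 [:: (a, 1)], p.2) | p <- sD x]
   [seq (p.1, smul p.2 [:: (a, 1)]) | p <- sD x].
Proof.
apply: teqS_intro => G H HH.
rewrite /triS /smash_Delta !big_map !big_flatten !big_map; apply: eq_bigr => p _.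
rewrite !big_map /=.
under eq_bigr do rewrite fT_smul1 !big_seq1 /=.
under [RHS]eq_bigr do rewrite fT_smul2 !big_seq1 /=.
have HP := bal3_H p.1 a HH.
transitivity (\sum_(q <- Delta p.2) \sum_(c <- Delta q.1)
   (fun x y z => H (p.1 * act x a) y z) c.1 c.2 q.2).
  by apply: eq_bigr => q _; apply: eq_bigr => c _; rewrite big_seq1 /= !mulr1.
rewrite (DL_coassoc _ HP) (K_lemma _ HP).
by apply: eq_bigr => q _; apply: eq_bigr => c _; rewrite !mulr1 mul1r.
Qed.

Lemma big_sD (G : zmodType) (F : seq (R * U) * seq (R * U) -> G) x :
  \sum_(z <- sD x) F z = \sum_(p <- x) \sum_(q <- Delta p.2) F ([:: (p.1, q.1)], [:: (1, q.2)]).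
Proof. by rewrite /smash_Delta big_flatten big_map; apply: eq_bigr => p _; rewrite big_map. Qed.

Lemma sgl_move r k x : seqv [:: (r, s k * x)] (smul [:: (iota k, 1)] [:: (r, x)]).
Proof. by apply: seqv_sym; apply: seqv_trans (L_lmul _ _) _; apply: seqv_bal. Qed.

Lemma sD_coassoc x : @teq3D _ SR [seq (q.1, q.2, p.2) | p <- sD x, q <- sD p.1]
    [seq (p.1, q.1, q.2) | p <- sD x, q <- sD p.2].
Proof.
move=> G f [e1 [e2 [e3 [a1 [a2 [a3 [m1 m2]]]]]]] /=.
rewrite !big_flatten !big_map !big_sD; apply: eq_bigr => p _.
under eq_bigr do rewrite big_map /= big_sD big_seq1 /=.
under [RHS]eq_bigr do rewrite big_map /= big_sD big_seq1 /=.
pose Phi a b c := f [:: (p.1, a)] [:: (1, b)] [:: (1, c)].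
have HP : bal3 Phi.
  rewrite /Phi; split => [x0 x1 y0 z0|x0 y0 y1 z0|x0 y0 z0 z1|k x0 y0 z0|k x0 y0 z0].
  - by rewrite (e1 _ _ _ _ (seqv_addr _ _ _)) -a1.
  - by rewrite (e2 _ _ _ _ (seqv_addr _ _ _)) -a2.
  - by rewrite (e3 _ _ _ _ (seqv_addr _ _ _)) -a3.
  - by rewrite (e1 _ _ _ _ (sgl_move _ _ _)) m1 -(e2 _ _ _ _ (sgl_move _ _ _)).
  - by rewrite (e2 _ _ _ _ (sgl_move _ _ _)) m2 -(e3 _ _ _ _ (sgl_move _ _ _)).
by have := DL_coassoc p.2 HP.
Qed.

Lemma fT_ss (G : zmodType) (H : R -> U -> U -> G) r u r' v a b :
  fT H (smul [:: (r, u)] [:: (r', v)]) (smul [:: (1, a)] [:: (1, b)]) =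
  \sum_(c <- Delta u) \sum_(d <- Delta a) H (r * act c.1 r' * (1 * act d.1 1)) (c.2 * v) (d.2 * b).
Proof.
rewrite /fT big_smul !big_seq1; apply: eq_bigr => c _.
by rewrite big_smul !big_seq1.
Qed.

Lemma Hcounit (G : zmodType) (H : R -> U -> U -> G) rho w a b : triBal H ->
  \sum_(d <- Delta a) H (rho * (1 * act d.1 1)) w (d.2 * b) = H rho w (a * b).
Proof.
case=> h1 h2 h3 h4 h5.
transitivity (\sum_(d <- Delta a) H rho w (s (eps d.1) * d.2 * b)).
  by apply: eq_bigr => d _; rewrite act_one mul1r mulrC h4 h5 mulrA.
by rewrite -(addf_sum (fun y z => h3 _ _ y z)) -mulr_suml counitlU.
Qed.

Lemma sD_mul x y : @teqD _ SR (sD (smul x y))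
   [seq (smul p.1 q.1, smul p.2 q.2) | p <- sD x, q <- sD y].
Proof.
apply: teqS_intro => G H HH; have [h1 h2 h3 h4 h5] := HH.
rewrite triS_D big_smul /triS big_flatten big_map big_sD; apply: eq_bigr => p _.
under [RHS]eq_bigr do rewrite big_map big_sD /=.
rewrite [RHS]exchange_big; apply: eq_bigr => p' _ /=.
under [RHS]eq_bigr do (under eq_bigr do (rewrite fT_ss; under eq_bigr do rewrite Hcounit //)).
set r := p.1; set u := p.2; set r' := p'.1; set v := p'.2.
pose Phi x y z := \sum_(b <- Delta v) H (r * act x r') (y * b.1) (z * b.2).
have HP : bal3 Phi.
  split => [x0 x1 y0 z0|x0 y0 y1 z0|x0 y0 z0 z1|k x0 y0 z0|k x0 y0 z0]; rewrite /Phi -?big_split;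
    apply: eq_bigr => b _.
  - by rewrite act_addl mulrDr h1.
  - by rewrite mulrDl h2.
  - by rewrite mulrDl h3.
  - by rewrite act_samul mulrA (mulrC r) -(mulrA (iota k)) h4 mulrA.
  - by rewrite -!mulrA h5.
transitivity (\sum_(q <- Delta u) \sum_(a <- Delta q.2) Phi q.1 a.1 a.2).
  apply: eq_bigr => q _.
  by have := DL_mul (balU_H (r * act q.1 r' * 1) HH) q.2 v; rewrite /sumU /= => ->; rewrite mulr1.
rewrite -(DL_coassoc _ HP); apply: eq_bigr => a _; rewrite exchange_big; apply: eq_bigr => c _ /=.
by rewrite /Phi; apply: eq_bigr => b _.
Qed.

Lemma sD_one : @teqD _ SR (sD [:: (1, 1)]) [:: ([:: (1, 1)], [:: (1, 1)])].
Proof.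
apply: teqS_intro => G H HH.
rewrite triS_D big_seq1 /triS big_seq1 fT_seq1 /=.
by have := DL_one (balU_H (1 * 1) HH); rewrite /sumU.
Qed.

Lemma sD_cocomm x : @teqD _ SR [seq (p.2, p.1) | p <- sD x] (sD x).
Proof.
apply: teqS_intro => G H HH.
rewrite triS_D /triS big_map big_sD; apply: eq_bigr => p _.
have := DL_cocomm (balU_H p.1 HH) p.2; rewrite /sumU mulr1 => <-.
by apply: eq_bigr => q _; rewrite fT_seq1 mul1r.
Qed.

Lemma eps_one' : eps 1 = 1. Proof. exact: (bg_eps_one HU). Qed.
Lemma eps_mul' u v : eps (u * v) = eps (u * s (eps v)). Proof. exact: (bg_eps_mul HU). Qed.

Lemma seps_lin a x : smash_eps s eps act (smul [:: (a, 1)] x) = a * smash_eps s eps act x.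
Proof.
rewrite !smash_epsE (seqv_use (L_lmul a x) balRU_eps) sm_map_l /sm mulr_sumr.
by apply: eq_bigr => p _; rewrite /epsg !act_sa; ring.
Qed.

Lemma seps_mul x y : smash_eps s eps act (smul x y) =
   smash_eps s eps act (smul x [:: (smash_eps s eps act y, 1)]).
Proof.
rewrite !smash_epsE !sm_mul; apply: eq_bigr => p _; rewrite big_seq1 /=.
transitivity (\sum_(p' <- y) \sum_(q <- Delta p.2)
   iota (eps q.2) * (p.1 * act q.1 (iota (eps p'.2) * p'.1))).
  apply: eq_bigr => p' _.
  pose Phi (x z : U) := iota (eps z) * (p.1 * act x p'.1).
  have HP : balU Phi.
    rewrite /Phi; split => [x0 x1 z|x2 z0 z1|a x2 z].
    - by rewrite act_addl !mulrDr.
    - by rewrite eps_add' iota_add mulrDl.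
    - by rewrite act_samul eps_lin' iota_mul; ring.
  transitivity (\sum_(q <- Delta p.2) Phi q.1 (q.2 * s (eps p'.2))).
    by apply: eq_bigr => q _; rewrite /Phi /epsg act_sa eps_mul'.
  have := DL_tak HP (eps p'.2) p.2; rewrite /= => <-.
  by apply: eq_bigr => q _; rewrite /Phi act_mulsa.
rewrite exchange_big; apply: eq_bigr => q _ /=.
rewrite /epsg mulr1 act_sa act_sumr mulr_sumr mulr_sumr; apply: eq_bigr => p' _.
by rewrite /epsg act_sa.
Qed.

Lemma sm_vsum (G : zmodType) (g : R -> U -> G) (l : seq (seq (R * U))) :
  sm g (@vsum _ SR l) = \sum_(z <- l) sm g z.
Proof. by elim: l => [|a l IH]; rewrite ?big_nil ?big_cons /= ?sm_cat ?IH // /sm big_nil. Qed.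

Lemma s_counitl x : seqv (@vsum _ SR [seq smul [:: (smash_eps s eps act p.1, 1)] p.2 | p <- sD x]) x.
Proof.
apply: seqv_intro => G g Hg; have [g1 g2 g3] := Hg.
rewrite sm_vsum big_map big_sD; apply: eq_bigr => p _ /=.
transitivity (\sum_(q <- Delta p.2) g p.1 (s (eps q.1) * q.2)).
  apply: eq_bigr => q _; rewrite (seqv_use (L_lmul _ _) Hg) /= sm_seq1 smash_epsE sm_seq1.
  by rewrite /epsg act_sa mulr1 g3.
by rewrite -(addf_sum (fun a b => g2 _ a b)) counitlU.
Qed.

Lemma s_counitr x : seqv (@vsum _ SR [seq smul [:: (smash_eps s eps act p.2, 1)] p.1 | p <- sD x]) x.
Proof.
apply: seqv_intro => G g Hg; have [g1 g2 g3] := Hg.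
rewrite sm_vsum big_map big_sD; apply: eq_bigr => p _ /=.
transitivity (\sum_(q <- Delta p.2) g p.1 (s (eps q.2) * q.1)).
  apply: eq_bigr => q _; rewrite (seqv_use (L_lmul _ _) Hg) /= sm_seq1 smash_epsE sm_seq1.
  by rewrite /epsg act_sa mulr1 g3.
by rewrite -(addf_sum (fun a b => g2 _ a b)) counitrU.
Qed.

Lemma smash_bgd : cocomm_bialgebroid SR.
Proof.
split => /=.
- exact: seqv_refl.
- exact: seqv_sym.
- exact: seqv_trans.
- move=> x x' y y' Hx Hy; apply: seqv_intro => G g Hg.
  by rewrite !sm_cat (seqv_use Hx Hg) (seqv_use Hy Hg).
- move=> x x' Hx; apply: seqv_intro => G g Hg.
  by rewrite !sm_opp // (seqv_use Hx Hg).
- exact: smul_compat.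
- by move=> x y z; rewrite catA; apply: seqv_refl.
- by move=> x y; apply: seqv_intro => G g Hg; rewrite !sm_cat addrC.
- by move=> x; apply: seqv_refl.
- move=> x; apply: seqv_intro => G g Hg.
  by rewrite sm_cat sm_opp // addNr /sm big_nil.
- exact: smul_assoc.
- exact: smul1l.
- exact: smul1r.
- by move=> x y z; rewrite /smash_mul map_cat flatten_cat; apply: seqv_refl.
- move=> x y z; apply: seqv_intro => G g Hg.
  rewrite sm_cat !sm_mul -big_split; apply: eq_bigr => p _.
  by rewrite big_cat.
- by move=> a b; apply: seqv_addl.
- by move=> a b; apply: seqv_sym; apply: seqv_trans (L_lmul _ _) _; apply: seqv_refl.
- exact: seqv_refl.
- exact: sD_compat.
- move=> x y; rewrite /smash_Delta map_cat flatten_cat => G f Hf; by [].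
- exact: sD_lin1.
- exact: sD_lin2.
- exact: sD_tak.
- exact: sD_coassoc.
- exact: sD_mul.
- exact: sD_one.
- exact: sD_cocomm.
- by move=> x y Hx; rewrite !smash_epsE (seqv_use Hx balRU_eps).
- by move=> x y; rewrite !smash_epsE sm_cat.
- exact: seps_lin.
- by rewrite smash_epsE sm_seq1 /epsg eps_one' s_one act1.
- exact: seps_mul.
- exact: s_counitl.
- exact: s_counitr.
Qed.


Definition balU' (G : zmodType) (f : U -> U -> G) :=
  [/\ (forall x x' y, f (x + x') y = f x y + f x' y),
      (forall x y y', f x (y + y') = f x y + f x y') &
      (forall a x y, f (x * s a) y = f x (s a * y))].

Lemma teqU'_use L L' : @teqD' _ DU L L' ->
  forall (G : zmodType) (f : U -> U -> G), balU' f -> sumU f L = sumU f L'.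
Proof.
move=> H G f [h1 h2 h3]; apply: H; split => //= [x x' y ->|x y y' ->] //.
Qed.

Lemma teqU'_intro L L' : (forall (G : zmodType) (f : U -> U -> G), balU' f -> sumU f L = sumU f L') ->
  @teqD' _ DU L L'.
Proof. move=> H G f [_ _ h3 h4 h5]; apply: H; split=> //. Qed.

Lemma teqU_refl L : @teqD _ DU L L. Proof. by []. Qed.
Lemma teqU_sym L L' : @teqD _ DU L L' -> @teqD _ DU L' L.
Proof. by move=> H G f Hf; rewrite (H G f Hf). Qed.
Lemma teqU_trans L1 L2 L3 : @teqD _ DU L1 L2 -> @teqD _ DU L2 L3 -> @teqD _ DU L1 L3.
Proof. by move=> H1 H2 G f Hf; rewrite (H1 G f Hf) (H2 G f Hf). Qed.
Lemma teqU_cat L1 L2 L1' L2' : @teqD _ DU L1 L1' -> @teqD _ DU L2 L2' ->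
  @teqD _ DU (L1 ++ L2) (L1' ++ L2').
Proof. by move=> H1 H2 G f Hf; rewrite !big_cat (H1 G f Hf) (H2 G f Hf). Qed.

Local Notation betaU := (@beta _ DU).

Lemma betaU_cat L L' : betaU (L ++ L') = betaU L ++ betaU L'.
Proof. by rewrite /beta map_cat flatten_cat. Qed.

Lemma sumU_betaU (G : zmodType) (f : U -> U -> G) L :
  sumU f (betaU L) = \sum_(p <- L) \sum_(q <- Delta p.1) f q.1 (q.2 * p.2).
Proof. by rewrite /sumU /beta big_flatten big_map; apply: eq_bigr => p _; rewrite big_map. Qed.

Lemma betaU_flatten (I : Type) (F : I -> seq (U * U)) (Gs : I -> seq (U * U)) (l : seq I) :
  (forall i, @teqD _ DU (betaU (F i)) (Gs i)) ->
  @teqD _ DU (betaU (flatten (map F l))) (flatten (map Gs l)).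
Proof.
move=> H; elim: l => [|i l IH] //=.
by rewrite betaU_cat; apply: teqU_cat.
Qed.

Definition lmul1 (a : A) (L : seq (U * U)) := [seq (s a * p.1, p.2) | p <- L].

Lemma lmul1_compat a L L' : @teqD _ DU L L' -> @teqD _ DU (lmul1 a L) (lmul1 a L').
Proof.
move=> H; apply: teqU_intro => G f [f1 f2 f3].
have := teqU_use H (f := fun x y => f (s a * x) y); rewrite /sumU !big_map; apply.
split => [x x' y|x y y'|b x y]; first by rewrite mulrDr f1.
  by rewrite f2.
by rewrite mulrA -!s_mul mulrC s_mul -mulrA f3.
Qed.

Lemma beta_lmul a L : @teqD _ DU (betaU (lmul1 a L)) (lmul1 a (betaU L)).
Proof.
apply: teqU_intro => G f Hf; have [f1 f2 f3] := Hf.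
rewrite sumU_betaU /lmul1 big_map /sumU /beta big_map big_flatten big_map.
apply: eq_bigr => p _ /=; rewrite big_map.
have Hb : balU (fun x y => f x (y * p.2)).
  by split => [x x' y|x y y'|b x y]; rewrite ?f1 ?mulrDl ?f2 // f3 mulrA.
by have := DL_lin Hb a p.1; rewrite /sumU /=.
Qed.

Lemma teqU_addl u u' v : @teqD _ DU [:: (u + u', v)] [:: (u, v); (u', v)].
Proof. by apply: teqU_intro => G f [f1 _ _]; rewrite /sumU big_seq1 !big_cons big_nil addr0 f1. Qed.
Lemma teqU_addr u v v' : @teqD _ DU [:: (u, v + v')] [:: (u, v); (u, v')].
Proof. by apply: teqU_intro => G f [_ f2 _]; rewrite /sumU big_seq1 !big_cons big_nil addr0 f2. Qed.
Lemma teqU_bal a u v : @teqD _ DU [:: (s a * u, v)] [:: (u, s a * v)].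
Proof. by apply: teqU_intro => G f [_ _ f3]; rewrite /sumU !big_seq1 f3. Qed.


Definition triBal' (G : zmodType) (H : R -> U -> U -> G) :=
  [/\ (forall r r' u v, H (r + r') u v = H r u v + H r' u v),
      (forall r u u' v, H r (u + u') v = H r u v + H r u' v),
      (forall r u v v', H r u (v + v') = H r u v + H r u v'),
      (forall a r u v, H (iota a * r) u v = H r (s a * u) v) &
      (forall a r u v, H r (u * s a) v = H r u (s a * v))].

Definition fT' (G : zmodType) (H : R -> U -> U -> G) (x y : seq (R * U)) :=
  \sum_(p <- x) \sum_(p' <- y) \sum_(q <- Delta p.2) H (p.1 * act q.1 p'.1) q.2 p'.2.
Definition triS' (G : zmodType) (H : R -> U -> U -> G) (X : seq (seq (R * U) * seq (R * U))) :=
  \sum_(z <- X) fT' H z.1 z.2.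

Definition balS' (G : zmodType) (f : seq (R * U) -> seq (R * U) -> G) :=
  balanced2 (ceq SR) (ceq SR) (cadd SR) (cadd SR) (@rmulB _ SR) (@lmulB _ SR) f.

Lemma balU_H' (G : zmodType) (H : R -> U -> U -> G) c r' v : triBal' H ->
  balU (fun x y => H (c * act x r') y v).
Proof.
case=> h1 h2 h3 h4 h5; split => [x x' y|x y y'|a x y]; rewrite ?act_addl ?mulrDr ?h1 ?h2 //.
by rewrite act_samul mulrA (mulrC c) -mulrA h4.
Qed.

Lemma T1' (G : zmodType) (H : R -> U -> U -> G) : triBal' H -> balS' (fT' H).
Proof.
move=> HH; have [h1 h2 h3 h4 h5] := HH.
have respx : forall x x' y, seqv x x' -> fT' H x y = fT' H x' y.
  move=> x x' y Hx.
  apply: (seqv_use Hx (g := fun r u => \sum_(p' <- y) \sum_(q <- Delta u) H (r * act q.1 p'.1) q.2 p'.2)).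
  split=> [r r' u|r u u'|a r u]; rewrite -?big_split; apply: eq_bigr => p' _.
  - by rewrite -big_split; apply: eq_bigr => q _; rewrite mulrDl h1.
  - by have := DL_add (balU_H' r p'.1 p'.2 HH) u u'; rewrite /sumU.
  - have := DL_lin (balU_H' r p'.1 p'.2 HH) a u; rewrite /sumU /= => ->.
    by apply: eq_bigr => q _; rewrite act_samul mulrA (mulrC r).
have respy : forall x y y', seqv y y' -> fT' H x y = fT' H x y'.
  move=> x y y' Hy; rewrite /fT' exchange_big [RHS]exchange_big.
  apply: (seqv_use Hy (g := fun r v => \sum_(p <- x) \sum_(q <- Delta p.2) H (p.1 * act q.1 r) q.2 v)).
  split=> [r r' u|r u u'|a r u]; rewrite -?big_split; apply: eq_bigr => p _.
  - by rewrite -big_split; apply: eq_bigr => q _; rewrite act_addr mulrDr h1.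
  - by rewrite -big_split; apply: eq_bigr => q _; rewrite h3.
  - under eq_bigr do rewrite -act_mulsa.
    have := DL_tak (balU_H' p.1 r u HH) a p.2; rewrite /= => ->.
    by apply: eq_bigr => q _; rewrite h5.
split => //=.
- by move=> x x' y; rewrite /fT' big_cat.
- move=> x y y'; rewrite /fT' -big_split; apply: eq_bigr => p _; by rewrite big_cat.
- move=> r x y; rewrite (respy _ _ _ (L_lmul r y)) /fT' big_smul; apply: eq_bigr => p _.
  rewrite big_seq1 big_map /=.
  rewrite exchange_big; apply: eq_bigr => p' _ /=.
  set r0 := p.1; set r' := p'.1; set v := p'.2.
  pose Phi x y z := H (r0 * act x r * act y r') z v.
  have HP : bal3 Phi.
    split => [x0 x1 y0 z0|x0 y0 y1 z0|x0 y0 z0 z1|k x0 y0 z0|k x0 y0 z0]; rewrite /Phi.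
    - by rewrite act_addl mulrDr mulrDl h1.
    - by rewrite act_addl mulrDr h1.
    - by rewrite h2.
    - rewrite !act_samul (_ : r0 * (iota k * act x0 r) * act y0 r' = iota k * (r0 * act x0 r * act y0 r')); last by ring.
      by rewrite (_ : r0 * act x0 r * (iota k * act y0 r') = iota k * (r0 * act x0 r * act y0 r')) //; ring.
    - by rewrite act_samul (_ : r0 * act x0 r * (iota k * act y0 r') = iota k * (r0 * act x0 r * act y0 r')) ?h4 //; ring.
  transitivity (\sum_(q <- Delta p.2) \sum_(c <- Delta q.2) Phi q.1 c.1 c.2).
    by apply: eq_bigr => q _; rewrite mulr1.
  rewrite -(DL_coassoc _ HP); apply: eq_bigr => q _.
  rewrite act_rmul mulr_sumr (addf_sum (fun a b => h1 a b _ _)); apply: eq_bigr => e _.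
  by rewrite /Phi mulrA.
Qed.


Lemma L_rmul_iota r u a : seqv (smul [:: (r, u)] [:: (iota a, 1)]) [:: (r, u * s a)].
Proof.
apply: seqv_intro => G g Hg; have [g1 g2 g3] := Hg.
rewrite sm_mul !big_seq1 sm_seq1 /=.
transitivity (\sum_(q <- Delta u) (fun x y => g (r * act x 1) (y * 1)) (q.1 * s a) q.2).
  by apply: eq_bigr => q _; rewrite /= act_mulsa !mulr1.
rewrite (DL_tak (balU_g r 1 1 Hg)) /=.
transitivity (\sum_(q <- Delta u) g r (s (eps q.1) * q.2 * s a)).
  by apply: eq_bigr => q _; rewrite act_one !mulr1 mulrC g3 mulrA.
by rewrite -(addf_sum (fun a b => g2 _ a b)) -mulr_suml counitlU.
Qed.

Lemma T2' (G : zmodType) (f : seq (R * U) -> seq (R * U) -> G) : balS' f ->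
  triBal' (Hf f) /\ forall x y, f x y = fT' (Hf f) x y.
Proof.
case=> [f1 f2 f3 f4 f5].
have fnil : forall y, f [::] y = 0.
  by move=> y; apply: (addrI (f [::] y)); rewrite -f3 addr0.
have fnil' : forall x, f x [::] = 0.
  by move=> x; apply: (addrI (f x [::])); rewrite -f4 addr0.
have fcons : forall a x y, f (a :: x) y = f [:: a] y + f x y by move=> a x y; rewrite -f3.
have fcons' : forall a x y, f x (a :: y) = f x [:: a] + f x y by move=> a x y; rewrite -f4.
have fsum : forall x y, f x y = \sum_(p <- x) f [:: p] y.
  move=> x y; elim: x => [|a x IH]; first by rewrite fnil big_nil.
  by rewrite fcons IH big_cons.
have move1 : forall c x y, f (smul x [:: (c,1)]) y = f x (smul [:: (c,1)] y) by exact: f5.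
split.
  split => /=.
  - move=> r r' u v; rewrite /Hf (f1 _ _ _ (seqv_addl r r' u)).
    by rewrite -f3.
  - move=> r u u' v; rewrite /Hf (f1 _ _ _ (seqv_addr r u u')).
    by rewrite -f3.
  - move=> r u v v'; rewrite /Hf (f2 _ _ _ (seqv_addr 1 v v')).
    by rewrite -f4.
  - by move=> a r u v; rewrite /Hf (f1 _ _ _ (seqv_bal a r u)).
  - move=> a r u v; rewrite /Hf -(f1 _ _ _ (L_rmul_iota r u a)) move1.
    by rewrite -(f2 _ _ _ (sgl_move 1 a v)).
move=> x y; rewrite fsum /fT'; apply: eq_bigr => [[r u]] _.
elim: y => [|[r' v] y IHy]; first by rewrite fnil' big_nil.
rewrite fcons' IHy big_cons; congr (_ + _) => /=.
have E1 : seqv (smul [:: (r', 1)] [:: (1, v)]) [:: (r', v)].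
  by apply: seqv_trans (L_lmul _ _) _; rewrite /= mulr1.
rewrite -(f2 _ _ _ E1) -move1 fsum big_smul !big_seq1 /=.
by apply: eq_bigr => q _; rewrite mulr1.
Qed.

Lemma teqS'_intro X Y : (forall (G : zmodType) (H : R -> U -> U -> G), triBal' H -> triS' H X = triS' H Y) ->
  @teqD' _ SR X Y.
Proof.
move=> HX G f Hbal; have [Ht Hd] := T2' Hbal.
have -> : \sum_(p <- X) f p.1 p.2 = triS' (Hf f) X by apply: eq_bigr => p _; rewrite Hd.
have -> : \sum_(p <- Y) f p.1 p.2 = triS' (Hf f) Y by apply: eq_bigr => p _; rewrite Hd.
exact: HX.
Qed.

Lemma teqS'_use X Y : @teqD' _ SR X Y ->
  forall (G : zmodType) (H : R -> U -> U -> G), triBal' H -> triS' H X = triS' H Y.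
Proof. by move=> HX G H Hb; apply: (HX G (fT' H)); apply: T1'. Qed.


Definition Hb (G : zmodType) (H : R -> U -> U -> G) r u v := \sum_(c <- Delta u) H r c.1 (c.2 * v).

Lemma Hb_bal (G : zmodType) (H : R -> U -> U -> G) : triBal H -> triBal' (Hb H).
Proof.
move=> HH; have [h1 h2 h3 h4 h5] := HH.
have Hb1 : forall r v, balU (fun x y => H r x (y * v)).
  by move=> r v; split => [x x' y|x y y'|a x y]; rewrite ?h2 ?mulrDl ?h3 // h5 mulrA.
split => [r r' u v|r u u' v|r u v v'|a r u v|a r u v]; rewrite /Hb.
- by rewrite -big_split; apply: eq_bigr => c _; rewrite h1.
- by have := DL_add (Hb1 r v) u u'; rewrite /sumU.
- by rewrite -big_split; apply: eq_bigr => c _; rewrite mulrDr h3.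
- have := DL_lin (Hb1 r v) a u; rewrite /sumU /= => ->.
  by apply: eq_bigr => c _; rewrite h4.
- have := DL_mul (Hb1 r v) u (s a); rewrite /sumU /= => ->.
  rewrite exchange_big /=.
  pose Xi x y := \sum_(c <- Delta u) H r (c.1 * x) (c.2 * y * v).
  have HXi : balU Xi.
    split => [x x' y|x y y'|b x y]; rewrite /Xi.
    - by rewrite -big_split; apply: eq_bigr => c _ /=; rewrite mulrDr h2.
    - by rewrite -big_split; apply: eq_bigr => c _ /=; rewrite mulrDr mulrDl h3.
    - have HPsi : balU (fun p q => H r (p * x) (q * y * v)).
        by split => [p p' q|p q q'|d p q]; rewrite ?mulrDl ?h2 ?h3 // -!mulrA h5.
      transitivity (\sum_(c <- Delta u) (fun p q => H r (p * x) (q * y * v)) (c.1 * s b) c.2).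
        by apply: eq_bigr => c _; rewrite mulrA.
      rewrite (DL_tak HPsi) /=; apply: eq_bigr => c _; by rewrite !mulrA.
  have HXi' : balU (fun x y => Xi (s a * x) y).
    have [x1 x2 x3] := HXi.
    split => [x x' y|x y y'|b x y]; rewrite ?mulrDr ?x1 ?x2 //.
    by rewrite mulrA -!s_mul mulrC s_mul -mulrA x3.
  transitivity (sumU Xi (Delta (s a * 1))); first by rewrite mulr1.
  rewrite (DL_lin HXi) /=.
  have := DL_one HXi'; rewrite /sumU /= => ->.
  rewrite /Xi mulr1.
  transitivity (\sum_(c <- Delta u) (fun p q => H r p (q * v)) (c.1 * s a) c.2).
    by apply: eq_bigr => c _; rewrite mulr1.
  rewrite (DL_tak (Hb1 r v)) /=; apply: eq_bigr => c _; by rewrite !mulrA.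
Qed.


Lemma triS_beta (G : zmodType) (H : R -> U -> U -> G) w : triBal H ->
  triS H (@beta _ SR w) = triS' (Hb H) w.
Proof.
move=> HH; have [h1 h2 h3 h4 h5] := HH.
rewrite /triS /beta big_flatten big_map /triS'; apply: eq_bigr => [[x y]] _ /=.
rewrite big_map big_sD /fT'; apply: eq_bigr => a _ /=.
under eq_bigr do rewrite fT_smul2 !big_seq1 /=.
rewrite exchange_big; apply: eq_bigr => b _ /=.
pose Phi x y z := H (a.1 * act x b.1) y (z * b.2).
have HP : bal3 Phi.
  split => [x0 x1 y0 z0|x0 y0 y1 z0|x0 y0 z0 z1|k x0 y0 z0|k x0 y0 z0]; rewrite /Phi.
  - by rewrite act_addl mulrDr h1.
  - by rewrite h2.
  - by rewrite mulrDl h3.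
  - by rewrite act_samul mulrA (mulrC a.1) -mulrA h4.
  - by rewrite h5 mulrA.
transitivity (\sum_(q <- Delta a.2) \sum_(c <- Delta q.2) Phi c.1 q.1 c.2).
  by apply: eq_bigr => q _; apply: eq_bigr => c _; rewrite /Phi mul1r.
by rewrite -(K_lemma _ HP) /Hb.
Qed.

Lemma fT'_11 (G : zmodType) (H : R -> U -> U -> G) r u v : triBal' H ->
  fT' H [:: (r, u)] [:: (1, v)] = H r u v.
Proof.
case=> h1 h2 h3 h4 h5; rewrite /fT' !big_seq1 /=.
transitivity (\sum_(q <- Delta u) H r (s (eps q.1) * q.2) v).
  by apply: eq_bigr => q _; rewrite act_one mulrC h4.
by rewrite -(addf_sum (fun a b => h2 _ a b _)) counitlU.
Qed.

Section Hopf.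
Hypothesis Hh : cocomm_hopf DU.

Definition W (u v : U) : seq (U * U) :=
  proj1_sig (constructive_indefinite_description _ (hopf_beta_surj Hh [:: (u, v)])).
Lemma WP u v : @teqD _ DU (betaU (W u v)) [:: (u, v)].
Proof. exact: (proj2_sig (constructive_indefinite_description _ (hopf_beta_surj Hh [:: (u, v)]))). Qed.

Lemma Winj L L' : @teqD _ DU (betaU L) (betaU L') ->
  forall (G : zmodType) (f : U -> U -> G), balU' f -> sumU f L = sumU f L'.
Proof. by move=> H; apply: teqU'_use; apply: (hopf_beta_inj Hh). Qed.

Lemma S_beta_compat w w' : @teqD' _ SR w w' -> @teqD _ SR (@beta _ SR w) (@beta _ SR w').
Proof.
move=> Hw; apply: teqS_intro => G H HH.
by rewrite !triS_beta //; apply: (teqS'_use Hw); apply: Hb_bal.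
Qed.

Lemma S_beta_inj w w' : @teqD _ SR (@beta _ SR w) (@beta _ SR w') -> @teqD' _ SR w w'.
Proof.
move=> Hbw; apply: teqS'_intro => G H' HH'; have [k1 k2 k3 k4 k5] := HH'.
have Hr : forall r, balU' (H' r) by move=> r; split => //.
pose Hww r u v := \sum_(z <- W u v) H' r z.1 z.2.
have HwB : triBal Hww.
  split => [r r' u v|r u u' v|r u v v'|a r u v|a r u v]; rewrite /Hww.
  - by rewrite -big_split; apply: eq_bigr => z _; rewrite k1.
  - rewrite -big_cat; apply: (Winj _ (Hr r)); rewrite betaU_cat.
    apply: teqU_trans (WP _ _) _; apply: teqU_trans (teqU_addl _ _ _) _.
    by apply: teqU_sym; apply: (teqU_cat (WP _ _) (WP _ _)).
  - rewrite -big_cat; apply: (Winj _ (Hr r)); rewrite betaU_cat.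
    apply: teqU_trans (WP _ _) _; apply: teqU_trans (teqU_addr _ _ _) _.
    by apply: teqU_sym; apply: (teqU_cat (WP _ _) (WP _ _)).
  - transitivity (sumU (H' r) (lmul1 a (W u v))).
      by rewrite /sumU /lmul1 big_map; apply: eq_bigr => z _; rewrite k4.
    apply: (Winj _ (Hr r)); apply: teqU_trans (beta_lmul _ _) _.
    apply: teqU_trans (lmul1_compat a (WP u v)) _.
    exact: (teqU_sym (WP _ _)).
  - apply: (Winj _ (Hr r)); apply: teqU_trans (WP _ _) _.
    apply: teqU_trans (teqU_bal _ _ _) _; exact: (teqU_sym (WP _ _)).
have E : forall r u v, Hb Hww r u v = H' r u v.
  move=> r u v; rewrite /Hb /Hww.
  transitivity (sumU (H' r) (flatten [seq W c.1 (c.2 * v) | c <- Delta u])).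
    by rewrite /sumU big_flatten big_map.
  rewrite (Winj (L' := [:: (u, v)]) _ (Hr r)); first by rewrite /sumU big_seq1.
  apply: teqU_trans (betaU_flatten (Gs := fun c => [:: (c.1, c.2 * v)]) _ (fun c => WP _ _)) _.
  apply: teqU_intro => G' f Hf.
  by rewrite sumU_betaU big_seq1 /sumU big_flatten big_map; apply: eq_bigr => c _; rewrite big_seq1.
have Ew : forall X, triS' H' X = triS' (Hb Hww) X.
  move=> X; rewrite /triS'; apply: eq_bigr => z _; rewrite /fT'; apply: eq_bigr => p _.
  apply: eq_bigr => p' _; apply: eq_bigr => q _; by rewrite E.
by rewrite !Ew -!triS_beta //; apply: (teqS_use Hbw).
Qed.

Lemma S_beta_surj z : exists w, @teqD _ SR (@beta _ SR w) z.
Proof.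
exists (flatten [seq flatten [seq flatten [seq [seq ([:: (p.1 * p'.1, c.1)], [:: (1, c.2)])
      | c <- W p.2 p'.2] | p' <- z0.2] | p <- z0.1] | z0 <- z]).
apply: teqS_intro => G H HH; rewrite triS_beta //.
have HbB := Hb_bal HH.
rewrite /triS' big_flatten big_map /triS; apply: eq_bigr => z0 _.
rewrite big_flatten big_map /fT; apply: eq_bigr => p _.
rewrite big_flatten big_map; apply: eq_bigr => p' _.
rewrite big_map.
under eq_bigr do rewrite /= fT'_11 //.
have := WP p.2 p'.2 => /teqU_use /(_ _ _ (balU_H (p.1 * p'.1) HH)).
by rewrite sumU_betaU /sumU big_seq1 /Hb.
Qed.

End Hopf.

End Smash.

Unset Implicit Arguments.
Set Strict Implicit.

Theorem lemma1p12 (A : comPzRingType) (U : pzRingType) (s : A -> U)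
  (Delta : U -> seq (U * U)) (eps : U -> A) (R : comPzRingType)
  (act : U -> R -> R) :
  module_algebra s Delta eps act ->
  (cocomm_bialgebroid (ring_raw s Delta eps) ->
     cocomm_bialgebroid (smash_raw s Delta eps act)) /\
  (cocomm_hopf (ring_raw s Delta eps) ->
     cocomm_hopf (smash_raw s Delta eps act)).
Proof.
move=> Hma; split; first by move=> HU; exact: smash_bgd.
move=> Hh; have HU := hopf_bgd Hh; split.
- exact: smash_bgd.
- by move=> w w'; apply: S_beta_compat.
- by move=> w w'; apply: S_beta_inj.
- by move=> z; apply: S_beta_surj.
Qed.
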